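(* The class of trapezoid graphs, and the class of permutation graphs, each contain a graph that is not a pairwise compatibility graph; i.e., neither class is contained in PCG.
   Context: All graphs are finite and simple. A graph $G=(V,E)$ is a pairwise compatibility graph (PCG) if there exist a tree $T$ with non-negative real edge weights, whose set of leaves is exactly $V$, and two non-negative real numbers $d_{min}\le d_{max}$ such that for all distinct $u,v\in V$, $(u,v)\in E$ if and only if $d_{min}\le d_T(u,v)\le d_{max}$, where $d_T(u,v)$ is the sum of the weights of the edges on the unique path from $u$ to $v$ in $T$. A trapezoid graph is the intersection graph of a family of trapezoids lying between two fixed parallel lines (each trapezoid having one side on each line). A permutation graph is the intersection graph of a family of straight line segments each joining a point of one fixed line to a point of a second fixed parallel line. *)

(* Defs.v *)
From HB Require Import structures.
From mathcomp Require Import all_boot all_order all_algebra.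
From mathcomp Require Import Rstruct.
From Stdlib Require Import Rdefinitions.
Set Implicit Arguments.
Unset Strict Implicit.
Unset Printing Implicit Defensive.
Import Order.TTheory GRing.Theory Num.Theory.
Local Open Scope ring_scope.

Definition simple_graph (V : finType) (E : rel V) : Prop :=
  irreflexive E /\ symmetric E.

Definition simple_path (U : finType) (t : rel U) (x : U) (p : seq U) (y : U) : bool :=
  [&& path t x p, last x p == y & uniq (x :: p)].

(* A tree: a simple graph in which any two vertices are joined by exactly one
   simple path (equivalently: connected and acyclic). *)
Definition is_tree (U : finType) (t : rel U) : Prop :=
  simple_graph t /\ forall x y : U, exists! p : seq U, simple_path t x p y.

(* Leaf of a tree: vertex of degree at most 1 (degree 0 only occurs in the
   one-vertex tree, whose unique vertex is a leaf). *)
Definition is_leaf (U : finType) (t : rel U) (x : U) : bool :=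
  leq #|[set y | t x y]| 1.

Fixpoint path_weight (U : Type) (w : U -> U -> R) (x : U) (p : seq U) : R :=
  match p with
  | [::] => 0
  | y :: p' => w x y + path_weight w y p'
  end.

(* G = (V, E) is a PCG if there is an edge-weighted tree (vertex type U, edge
   relation t, non-negative symmetric weights w) whose leaves are exactly the
   vertices of V (identified via the injection f : V -> U whose image is the set
   of leaves), and reals 0 <= dmin <= dmax such that for distinct u, v,
   uv is an edge iff dmin <= d_T(u, v) <= dmax, where d_T(u, v) is the weight of
   the (unique) simple path from f u to f v. *)
Definition PCG (V : finType) (E : rel V) : Prop :=
  exists (U : finType) (t : rel U) (w : U -> U -> R) (f : V -> U) (dmin dmax : R),
    [/\ is_tree t,
        (forall x y, 0 <= w x y) /\ (forall x y, w x y = w y x),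
        injective f /\ (forall x : U, (exists v, f v = x) <-> is_leaf t x),
        0 <= dmin /\ dmin <= dmax &
        forall u v : V, u != v -> forall p : seq U, simple_path t (f u) p (f v) ->
          (E u v <-> (dmin <= path_weight w (f u) p /\ path_weight w (f u) p <= dmax))].

(* Two parallel lines y = 1 (top) and y = 0 (bottom).  The trapezoid with top
   side [a, b] x {1} and bottom side [c, d] x {0} (a < b, c < d) is the set of
   points (x, s), 0 <= s <= 1, with s*a + (1-s)*c <= x <= s*b + (1-s)*d. *)
Definition in_trapezoid (a b c d : R) (x s : R) : Prop :=
  0 <= s /\ s <= 1 /\
  s * a + (1 - s) * c <= x /\ x <= s * b + (1 - s) * d.

Definition trapezoid_graph (V : finType) (E : rel V) : Prop :=
  exists a b c d : V -> R,
    (forall v, a v < b v /\ c v < d v) /\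
    forall u v : V, u != v ->
      (E u v <-> exists x s : R,
         in_trapezoid (a u) (b u) (c u) (d u) x s /\
         in_trapezoid (a v) (b v) (c v) (d v) x s).

(* Segment joining (p v, 1) to (q v, 0): the points (s*p v + (1-s)*q v, s),
   0 <= s <= 1.  Edges = pairs of distinct intersecting segments. *)
Definition in_segment (p q : R) (x s : R) : Prop :=
  0 <= s /\ s <= 1 /\ x = s * p + (1 - s) * q.

Definition permutation_graph (V : finType) (E : rel V) : Prop :=
  exists p q : V -> R,
    forall u v : V, u != v ->
      (E u v <-> exists x s : R,
         in_segment (p u) (q u) x s /\ in_segment (p v) (q v) x s).

(* Main.v *)
From Stdlib Require Import Rdefinitions.
Require Import Defs.
From mathcomp Require Import all_boot all_order all_algebra.
From mathcomp Require Import Rstruct ring lra.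
Set Implicit Arguments.
Unset Strict Implicit.
Unset Printing Implicit Defensive.
Import Order.TTheory GRing.Theory Num.Theory.
Local Open Scope ring_scope.

Section Seqs.
Variable U : eqType.

Fixpoint lcp (p q : seq U) : nat :=
  match p, q with
  | x :: p', y :: q' => if x == y then (lcp p' q').+1 else 0%N
  | _, _ => 0%N
  end.

Lemma lcp_take p q : take (lcp p q) p = take (lcp p q) q.
Proof.
elim: p q => [|x p IH] [|y q] //=; case: eqP => [->|] //=.
by rewrite IH.
Qed.

Lemma lcp_sym p q : lcp p q = lcp q p.
Proof.
elim: p q => [|x p IH] [|y q] //=; rewrite eq_sym; case: eqP => // _.
by rewrite IH.
Qed.

Lemma lcp_sizel p q : (lcp p q <= size p)%N.
Proof.
elim: p q => [|x p IH] q; first by case: q.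
case: q => [|y q] //=; case: ifP => // _; exact: IH.
Qed.

Lemma lcp_max p q n : (n <= size p)%N -> take n p = take n q -> (n <= lcp p q)%N.
Proof.
elim: p q n => [|x p IH] q [|n] //= Hn.
case: q => [|y q] //= [Hxy Ht]; rewrite Hxy eqxx ltnS; exact: IH.
Qed.

Lemma lcp_ultra p q r : (minn (lcp p r) (lcp p q) <= lcp q r)%N.
Proof.
elim: p q r => [|x p IH] [|y q] [|z r] //=; rewrite ?minn0 ?min0n //.
have [Exz|Hxz] := eqVneq x z; have [Exy|Hxy] := eqVneq x y;
  rewrite /= ?minn0 ?min0n //.
- subst; rewrite eqxx minnSS ltnS; exact: IH.
Qed.
End Seqs.

Section Weights.
Variable U : Type.
Variable w : U -> U -> R.
Hypothesis w_ge0 : forall x y, 0 <= w x y.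
Hypothesis w_sym : forall x y, w x y = w y x.
Local Notation W := (path_weight w).

Lemma W_nil a : W a [::] = 0.
Proof. by []. Qed.
Lemma W_cons a y s : W a (y :: s) = w a y + W y s.
Proof. by []. Qed.

Lemma W_cat a s1 s2 : W a (s1 ++ s2) = W a s1 + W (last a s1) s2.
Proof.
elim: s1 a => [|y s IH] a; first by rewrite cat0s W_nil add0r.
by rewrite cat_cons !W_cons IH addrA.
Qed.

Lemma W_ge0 a s : 0 <= W a s.
Proof. elim: s a => [|y s IH] a; by rewrite ?W_nil ?W_cons ?addr_ge0. Qed.

Lemma W_take_mono a s k k' : (k <= k')%N -> W a (take k s) <= W a (take k' s).
Proof.
move=> Hk; rewrite -(subnKC Hk) takeD W_cat lerDl; exact: W_ge0.
Qed.

Lemma last_rev_belast (x : U) s : last (last x s) (rev (belast x s)) = x.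
Proof.
elim: s x => [|y s IH] x //=.
by rewrite rev_cons last_rcons.
Qed.

Lemma W_rev x s : W (last x s) (rev (belast x s)) = W x s.
Proof.
elim: s x => [|y s IH] x //.
change (W (last y s) (rev (x :: belast y s)) = W x (y :: s)).
rewrite rev_cons -cats1 W_cat IH last_rev_belast W_cons W_cons W_nil addr0 addrC w_sym //.
Qed.
End Weights.

Section Tree.
Variable U : finType.
Variable t : rel U.
Variable w : U -> U -> R.
Hypothesis Htree : is_tree t.
Hypothesis w_ge0 : forall x y, 0 <= w x y.
Hypothesis w_sym : forall x y, w x y = w y x.
Local Notation W := (path_weight w).

Lemma simple_take a p b i : simple_path t a p b -> (i < size p)%N ->
  simple_path t a (take i.+1 p) (nth a p i).
Proof.
move=> /and3P [Hp _ Hu] Hi; apply/and3P; split.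
- exact: take_path.
- rewrite -nth_last size_takel // nth_take //.
- by have -> : a :: take i.+1 p = take i.+2 (a :: p) by []; apply: take_uniq.
Qed.

Lemma path_uniq a p q b : simple_path t a p b -> simple_path t a q b -> p = q.
Proof.
move=> Hp Hq; have [p0 [_ H]] := Htree.2 a b.
by rewrite -(H p Hp) -(H q Hq).
Qed.

Lemma notin_take (p : seq U) k v : uniq p -> v \in drop k p -> v \notin take k p.
Proof.
move=> Hu Hv; move: Hu; rewrite -{1}(cat_take_drop k p) cat_uniq => /and3P [_ Hh _].
apply/negP => Hin; move/negP: Hh; apply; apply/hasP; by exists v.
Qed.

Lemma index_ge (p : seq U) k v : uniq p -> v \in drop k p -> (k <= index v p)%N.
Proof.
move=> Hu Hv.
have Hk : (k <= size p)%N.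
  by rewrite leqNgt; apply/negP => H; move: Hv; rewrite drop_oversize // ltnW.
rewrite -(cat_take_drop k p) index_cat (negbTE (notin_take Hu Hv)) size_takel //.
exact: leq_addr.
Qed.

Lemma disjoint_drops a p b q c v : simple_path t a p b -> simple_path t a q c ->
  v \in drop (lcp p q) p -> v \in drop (lcp p q) q -> False.
Proof.
move=> Hp Hq Hvp Hvq.
have Hup : uniq p by case/and3P: Hp => _ _ /= /andP [].
have Huq : uniq q by case/and3P: Hq => _ _ /= /andP [].
have Hip := index_ge Hup Hvp.
have Hiq := index_ge Huq Hvq.
have vp : v \in p by apply: mem_drop Hvp.
have vq : v \in q by apply: mem_drop Hvq.
have ip : (index v p < size p)%N by rewrite index_mem.
have iq : (index v q < size q)%N by rewrite index_mem.
have sp := simple_take Hp ip; rewrite nth_index // in sp.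
have sq := simple_take Hq iq; rewrite nth_index // in sq.
have E := path_uniq sp sq.
have Es : index v p = index v q.
  by have := congr1 size E; rewrite !size_takel //; case.
rewrite -Es in E.
have := lcp_max ip E.
by rewrite leqNgt ltnS Hip.
Qed.
Lemma split_simple a p b k : simple_path t a p b ->
  [/\ path t (last a (take k p)) (drop k p), last (last a (take k p)) (drop k p) = b,
      uniq (drop k p) & last a (take k p) \notin drop k p].
Proof.
case/and3P => Hp Hl Hu.
move: Hp Hl Hu; rewrite -{1 2 3}(cat_take_drop k p) cat_path last_cat => /andP [_ ->] /eqP ->.
rewrite -cat_cons cat_uniq => /and3P [_ Hh ->]; split => //.
apply/negP => Hin; move/negP: Hh; apply; apply/hasP; exists (last a (take k p)) => //.
exact: mem_last.
Qed.

Lemma decomp a b c p q r : simple_path t a p b -> simple_path t a q c ->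
  simple_path t b r c ->
  W a p + W a q = W b r + 2 * W a (take (lcp p q) p).
Proof.
move=> Hp Hq Hr.
set k := lcp p q.
have Etk : take k q = take k p by rewrite /k lcp_take.
set c0 := last a (take k p).
have [Pp Lp Up Np] := split_simple k Hp.
have [Pq Lq Uq Nq] := split_simple k Hq.
rewrite Etk -/c0 in Pq Lq Nq.
set dp := drop k p in Pp Lp Up Np *; set dq := drop k q in Pq Lq Uq Nq *.
have Ep : W a p = W a (take k p) + W c0 dp by rewrite -{1}(cat_take_drop k p) W_cat.
have Eq : W a q = W a (take k p) + W c0 dq by rewrite -{1}(cat_take_drop k q) W_cat Etk.
have Hsym : symmetric t := Htree.1.2.
set r' := rev (belast c0 dp) ++ dq.
have Erev : b :: rev (belast c0 dp) = rev (c0 :: dp).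
  by rewrite (lastI c0 dp) rev_rcons Lp.
have Lrev : last b (rev (belast c0 dp)) = c0 by rewrite -Lp last_rev_belast.
have Hr' : simple_path t b r' c.
  apply/and3P; split.
  - rewrite cat_path Lrev Pq andbT -Lp rev_path.
    by rewrite (@eq_path _ _ t) // => x y; rewrite Hsym.
  - by rewrite last_cat Lrev Lq.
  - rewrite -cat_cons Erev cat_uniq rev_uniq /= Np Up Uq /=.
    rewrite andbT.
    apply/hasPn => v Hv /=; rewrite mem_rev in_cons negb_or; apply/andP; split.
    + by apply/eqP => Hvc; move: Nq; rewrite -Hvc Hv.
    + by apply/negP => Hvd; exact: (disjoint_drops Hp Hq Hvd Hv).
have -> := path_uniq Hr Hr'.
rewrite /r' W_cat Lrev -{1}Lp W_rev // Ep Eq.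
lra.
Qed.
Lemma four_point a b c e pab pac pae pbc pbe pce :
  simple_path t a pab b -> simple_path t a pac c -> simple_path t a pae e ->
  simple_path t b pbc c -> simple_path t b pbe e -> simple_path t c pce e ->
  W a pab + W c pce <= W a pac + W b pbe \/
  W a pab + W c pce <= W a pae + W b pbc.
Proof.
move=> Hab Hac Hae Hbc Hbe Hce.
have D1 := decomp Hab Hac Hbc.
have D2 := decomp Hab Hae Hbe.
have D3 := decomp Hac Hae Hce.
have U3 := lcp_ultra pab pac pae.
set m1 := lcp pab pae in D2 U3; set m2 := lcp pab pac in D1 U3;
set k := lcp pac pae in D3 U3.
have [Hm|Hm] := leqP m1 m2.
- left.
  have E1 : take m1 pab = take m1 pac.
    by rewrite -(take_takel pab Hm) /m2 lcp_take take_takel.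
  have : W a (take m1 pab) <= W a (take k pac).
    rewrite E1; apply: W_take_mono => //.
    by move: U3; rewrite (minn_idPl Hm).
  lra.
- right.
  have Hm' : (m2 <= m1)%N by apply: ltnW.
  have E1 : take m2 pab = take m2 pae.
    by rewrite -(take_takel pab Hm') /m1 lcp_take take_takel.
  have : W a (take m2 pab) <= W a (take k pac).
    rewrite E1 /k lcp_take; apply: W_take_mono => //.
    by move: U3; rewrite (minn_idPr Hm').
  lra.
Qed.
End Tree.

Definition GE : rel 'I_8 :=
  fun i j => (i != j) && (((i < 4)%N != (j < 4)%N) || (i./2 == j./2)).

Lemma notPCG : ~ PCG GE.
Proof.
move=> [U [t [w [f [dmin [dmax [Htree [w_ge0 w_sym] [finj Hleaf] [Hd0 Hd] Hcond]]]]]]].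
have exP : forall u v : 'I_8, exists p, simple_path t (f u) p (f v).
  by move=> u v; have [p [Hp _]] := Htree.2 (f u) (f v); exists p.
pose P u v := xchoose (exP u v).
have HP : forall u v, simple_path t (f u) (P u v) (f v) by move=> u v; exact: (xchooseP (exP u v)).
pose d u v := path_weight w (f u) (P u v).
have Hedge : forall u v, GE u v -> dmin <= d u v <= dmax.
  move=> u v Huv; have Hne : u != v by case/andP: Huv.
  by have [H _] := Hcond u v Hne (P u v) (HP u v); case: (H Huv) => -> ->.
have Hnon : forall u v, u != v -> ~~ GE u v -> d u v < dmin \/ dmax < d u v.
  move=> u v Hne Hn; have [_ H] := Hcond u v Hne (P u v) (HP u v).
  case: (ltrP (d u v) dmin) => H1; first by left.
  case: (ltrP dmax (d u v)) => H2; first by right.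
  by move/negP: Hn; case; apply: H.
have FP : forall u v x y, d u v + d x y <= d u x + d v y \/ d u v + d x y <= d u y + d v x.
  move=> u v x y; exact: (four_point Htree w_ge0 w_sym (HP u v) (HP u x) (HP u y) (HP v x) (HP v y) (HP x y)).
have Long : forall u v x y, GE u v -> GE x y ->
    u != x -> u != y -> v != x -> v != y ->
    ~~ GE u x -> ~~ GE u y -> ~~ GE v x -> ~~ GE v y ->
    dmax < d u x \/ dmax < d v y \/ dmax < d u y \/ dmax < d v x.
  move=> u v x y E1 E2 n1 n2 n3 n4 N1 N2 N3 N4.
  move: (Hedge _ _ E1) (Hedge _ _ E2) => /andP [A1 _] /andP [A2 _].
  case: (Hnon _ _ n1 N1) => B1; [|by left].
  case: (Hnon _ _ n4 N4) => B4; [|by right; left].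
  case: (Hnon _ _ n2 N2) => B2; [|by right; right; left].
  case: (Hnon _ _ n3 N3) => B3; [|by right; right; right].
  exfalso; case: (FP u v x y); lra.
have Cross : forall a a' b b', dmax < d a a' -> dmax < d b b' ->
    GE a b -> GE a' b' -> GE a b' -> GE a' b -> False.
  move=> a a' b b' L1 L2 E1 E2 E3 E4.
  move: (Hedge _ _ E1) (Hedge _ _ E2) (Hedge _ _ E3) (Hedge _ _ E4).
  move=> /andP [_ C1] /andP [_ C2] /andP [_ C3] /andP [_ C4].
  case: (FP a a' b b'); lra.
have LA := Long (@Ordinal 8 0 isT) (@Ordinal 8 1 isT) (@Ordinal 8 2 isT) (@Ordinal 8 3 isT) isT isT isT isT isT isT isT isT isT isT.
have LB := Long (@Ordinal 8 4 isT) (@Ordinal 8 5 isT) (@Ordinal 8 6 isT) (@Ordinal 8 7 isT) isT isT isT isT isT isT isT isT isT isT.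
by case: LA => [H1|[H1|[H1|H1]]]; case: LB => [H2|[H2|[H2|H2]]];
  exact: (Cross _ _ _ _ H1 H2 isT isT isT isT).
Qed.

Lemma frac01 (N D : R) : 0 < D -> 0 <= N -> N <= D -> 0 <= N / D /\ N / D <= 1.
Proof.
move=> HD HN HND; split; first by apply: divr_ge0 => //; lra.
by rewrite ler_pdivrMr // mul1r.
Qed.

Lemma cross_iff (al be e : R) : 0 <= e -> e < 1 ->
  (al <= -1 \/ 1 <= al) -> (be <= -1 \/ 1 <= be) ->
  ((exists s, 0 <= s /\ s <= 1 /\ - e <= s * al + (1 - s) * be /\
      s * al + (1 - s) * be <= e) <-> al * be < 0).
Proof.
move=> He0 He1 Ha Hb; split.
- move=> [s [Hs0 [Hs1 [H1 H2]]]].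
  case: Ha => Ha; case: Hb => Hb.
  + have P1 : 0 <= s * (- al - 1) by apply: mulr_ge0; lra.
    have P2 : 0 <= (1 - s) * (- be - 1) by apply: mulr_ge0; lra.
    exfalso; nra.
  + nra.
  + nra.
  + have P1 : 0 <= s * (al - 1) by apply: mulr_ge0; lra.
    have P2 : 0 <= (1 - s) * (be - 1) by apply: mulr_ge0; lra.
    exfalso; nra.
- move=> Hab.
  have Hd : be - al != 0.
    apply/negP => /eqP H; have : al = be by lra.
    by move=> E; rewrite E -expr2 ltNge sqr_ge0 in Hab.
  exists (be / (be - al)).
  have E : be / (be - al) * al + (1 - be / (be - al)) * be = 0.
    by field.
  rewrite E.
  have [H1 H2] : 0 <= be / (be - al) /\ be / (be - al) <= 1.
    case: Ha => Ha; case: Hb => Hb; try (exfalso; nra).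
    * apply: frac01; lra.
    * have -> : be / (be - al) = (- be) / (al - be).
        by field; rewrite Hd andbT; apply/eqP => H; move/eqP: Hd; apply; lra.
      apply: frac01; lra.
  lra.
Qed.

Lemma nat_gap (m n : nat) (x : R) : m != n -> x = m%:R - n%:R ->
  x <= -1 \/ 1 <= x.
Proof.
move=> Hmn ->; case: (ltngtP m n) => H.
- left; have : m.+1%:R <= n%:R :> R by rewrite ler_nat.
  rewrite -natr1; lra.
- right; have : n.+1%:R <= m%:R :> R by rewrite ler_nat.
  rewrite -natr1; lra.
- by rewrite H eqxx in Hmn.
Qed.

Lemma nat_pos (m n : nat) (x : R) : x = m%:R - n%:R -> (0 < x) = (n < m)%N.
Proof. by move=> ->; rewrite subr_gt0 ltr_nat. Qed.

Lemma sign_prod (al be : R) : (al <= -1 \/ 1 <= al) -> (be <= -1 \/ 1 <= be) ->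
  (al * be < 0 <-> (0 < al) != (0 < be)).
Proof.
move=> Ha Hb.
have Sa : (al <= -1 /\ (0 < al) = false) \/ (1 <= al /\ (0 < al) = true).
  by case: Ha => H; [left; split => //; apply/negbTE; rewrite -leNgt; lra | right; split => //; apply/idP; lra].
have Sb : (be <= -1 /\ (0 < be) = false) \/ (1 <= be /\ (0 < be) = true).
  by case: Hb => H; [left; split => //; apply/negbTE; rewrite -leNgt; lra | right; split => //; apply/idP; lra].
case: Sa => [[H1 ->]|[H1 ->]]; case: Sb => [[H2 ->]|[H2 ->]]; split => //= H; try nra.
Qed.

Lemma seg_iff (pu qu pv qv : R) :
  (exists x s, in_segment pu qu x s /\ in_segment pv qv x s) <->
  exists s, 0 <= s /\ s <= 1 /\ - 0 <= s * (pu - pv) + (1 - s) * (qu - qv) /\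
            s * (pu - pv) + (1 - s) * (qu - qv) <= 0.
Proof.
have E : forall s : R, s * (pu - pv) + (1 - s) * (qu - qv) =
   (s * pu + (1 - s) * qu) - (s * pv + (1 - s) * qv) by move=> s; ring.
split.
- move=> [x [s [[H0 [H1 Hx]] [_ [_ Hy]]]]]; exists s; rewrite E -Hx -Hy; do !split => //; lra.
- move=> [s [H0 [H1 [H2 H3]]]]; exists (s * pu + (1 - s) * qu), s.
  rewrite E in H2 H3; do !split => //; lra.
Qed.

Lemma trap_iff (pu qu pv qv : R) :
  (exists x s, in_trapezoid pu (pu + 2^-1)%R qu (qu + 2^-1)%R x s /\
               in_trapezoid pv (pv + 2^-1)%R qv (qv + 2^-1)%R x s) <->
  exists s, 0 <= s /\ s <= 1 /\ - 2^-1 <= s * (pu - pv) + (1 - s) * (qu - qv) /\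
            s * (pu - pv) + (1 - s) * (qu - qv) <= 2^-1.
Proof.
have E : forall s : R, s * (pu - pv) + (1 - s) * (qu - qv) =
   (s * pu + (1 - s) * qu) - (s * pv + (1 - s) * qv) by move=> s; ring.
have F : forall s p q : R, s * (p + 2^-1) + (1 - s) * (q + 2^-1) =
   (s * p + (1 - s) * q) + 2^-1 by move=> s p q; ring.
split.
- move=> [x [s [[H0 [H1 [Hx1 Hx2]]] [_ [_ [Hy1 Hy2]]]]]]; exists s.
  rewrite F in Hx2; rewrite F in Hy2; rewrite E; do !split => //; lra.
- move=> [s [H0 [H1 [H2 H3]]]]; rewrite E in H2 H3.
  set Lu := s * pu + (1 - s) * qu in H2 H3 *; set Lv := s * pv + (1 - s) * qv in H2 H3 *.
  exists (Num.max Lu Lv), s; rewrite /in_trapezoid !F -/Lu -/Lv.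
  have [Hm|Hm] := leP Lu Lv; do !split => //; lra.
Qed.


Definition pm (i : 'I_8) : nat := nth 0%N [:: 5; 4; 7; 6; 1; 0; 3; 2]%N i.

Ltac ord8 u := case: u => [[|[|[|[|[|[|[|[|//]]]]]]]] ?].

Lemma GE_perm (u v : 'I_8) : u != v -> GE u v = ((v < u)%N != (pm v < pm u)%N).
Proof. by ord8 u; ord8 v. Qed.

Lemma pm_inj (u v : 'I_8) : u != v -> pm u != pm v.
Proof. by ord8 u; ord8 v. Qed.

Lemma GE_simple : simple_graph GE.
Proof.
split; first by move=> i; rewrite /GE eqxx.
by move=> u v; ord8 u; ord8 v.
Qed.

Lemma GE_perm_graph : permutation_graph GE.
Proof.
exists (fun u => (nat_of_ord u)%:R), (fun u => (pm u)%:R) => u v Huv.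
have Ga := nat_gap (x := (nat_of_ord u)%:R - (nat_of_ord v)%:R) Huv erefl.
have Gb := nat_gap (x := (pm u)%:R - (pm v)%:R) (pm_inj Huv) erefl.
rewrite seg_iff (cross_iff (lexx 0) ltr01 Ga Gb) (sign_prod Ga Gb).
rewrite (nat_pos erefl) (nat_pos erefl) GE_perm //.
Qed.

Lemma GE_trap_graph : trapezoid_graph GE.
Proof.
exists (fun u => (nat_of_ord u)%:R), (fun u => (nat_of_ord u)%:R + 2^-1),
       (fun u => (pm u)%:R), (fun u => (pm u)%:R + 2^-1); split.
  by move=> v; split; rewrite ltrDl invr_gt0 ltr0n.
move=> u v Huv.
have Ga := nat_gap (x := (nat_of_ord u)%:R - (nat_of_ord v)%:R) Huv erefl.
have Gb := nat_gap (x := (pm u)%:R - (pm v)%:R) (pm_inj Huv) erefl.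
have He0 : (0 : R) <= 2^-1 by rewrite invr_ge0 ler0n.
have He1 : (2^-1 : R) < 1 by rewrite invf_lt1 ?ltr0n // ltr1n.
rewrite trap_iff (cross_iff He0 He1 Ga Gb) (sign_prod Ga Gb).
rewrite (nat_pos erefl) (nat_pos erefl) GE_perm //.
Qed.

Theorem corollary2 :
  (exists (V : finType) (E : rel V),
      simple_graph E /\ trapezoid_graph E /\ ~ PCG E) /\
  (exists (V : finType) (E : rel V),
      simple_graph E /\ permutation_graph E /\ ~ PCG E).
Proof.
split; exists (ordinal 8 : finType), GE; split.
- exact: GE_simple.
- split; [exact: GE_trap_graph | exact: notPCG].
- exact: GE_simple.
- split; [exact: GE_perm_graph | exact: notPCG].
Qed.
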